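(* Assume the setting and Assumption (A) in the context, and let $f:\mathcal{X}\to\mathbb{R}^{n_{\text{out}}}$ satisfy $A(x)f(x)\le b(x)$ and $C(x)f(x)=d(x)$ for all $x\in\mathcal{X}$. Write $f(x)=\begin{bmatrix} f_1(x)\\ f_2(x)\end{bmatrix}$ with $f_1(x)\in\mathbb{R}^{n_{\text{eq}}}$, $f_2(x)\in\mathbb{R}^{n_{\text{out}}-n_{\text{eq}}}$. Then for every $f_\theta:\mathcal{X}\to\mathbb{R}^{n_{\text{out}}-n_{\text{eq}}}$ and every $x\in\mathcal{X}$, $$\|f(x)-\mathcal{P}(f_\theta)(x)\|_2\le \big(1+\|\tilde A(x)^+\|_2\,\|\tilde A(x)\|_2\big)\sqrt{1+\|C_1(x)^{-1}C_2(x)\|_2^2}\;\|f_2(x)-f_\theta(x)\|_2,$$ where for matrices $\|\cdot\|_2$ denotes the operator norm induced by the Euclidean norm.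
   Context: Setting: $\mathcal{X}\subset\mathbb{R}^{n_{\text{in}}}$; integers $n_{\text{ineq}}\ge 0$, $0\le n_{\text{eq}}\le n_{\text{out}}$; maps $A:\mathcal{X}\to\mathbb{R}^{n_{\text{ineq}}\times n_{\text{out}}}$, $b:\mathcal{X}\to\mathbb{R}^{n_{\text{ineq}}}$, $C:\mathcal{X}\to\mathbb{R}^{n_{\text{eq}}\times n_{\text{out}}}$, $d:\mathcal{X}\to\mathbb{R}^{n_{\text{eq}}}$, describing the constraints $A(x)y\le b(x)$, $C(x)y=d(x)$ on $y\in\mathbb{R}^{n_{\text{out}}}$. Write $A(x)=[A_1(x)\;A_2(x)]$ and $C(x)=[C_1(x)\;C_2(x)]$, where $A_1,C_1$ consist of the first $n_{\text{eq}}$ columns and $A_2,C_2$ of the last $n_{\text{out}}-n_{\text{eq}}$ columns. (If $n_{\text{eq}}=0$, the equality constraints, $C_1$, $C_2$, $d$ and the first block below are absent.) Assumption (A): (i) for every $x\in\mathcal{X}$ there exists $y\in\mathbb{R}^{n_{\text{out}}}$ with $A(x)y\le b(x)$ and $C(x)y=d(x)$; (ii) $C_1(x)$ is invertible for all $x\in\mathcal{X}$; (iii) $\tilde A(x):=A_2(x)-A_1(x)C_1(x)^{-1}C_2(x)\in\mathbb{R}^{n_{\text{ineq}}\times(n_{\text{out}}-n_{\text{eq}})}$ has full row rank for all $x\in\mathcal{X}$. Define $\tilde b(x):=b(x)-A_1(x)C_1(x)^{-1}d(x)$. For a full-row-rank matrix $M$, $M^+:=M^\top(MM^\top)^{-1}$.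 $\mathsf{ReLU}(v)$ is the componentwise $\max(v,0)$. HardNet-Aff: for $f_\theta:\mathcal{X}\to\mathbb{R}^{n_{\text{out}}-n_{\text{eq}}}$, define $f_\theta^*(x):=f_\theta(x)-\tilde A(x)^+\,\mathsf{ReLU}\big(\tilde A(x)f_\theta(x)-\tilde b(x)\big)$ and $$\mathcal{P}(f_\theta)(x):=\begin{bmatrix} C_1(x)^{-1}\big(d(x)-C_2(x)f_\theta^*(x)\big)\\ f_\theta^*(x)\end{bmatrix}\in\mathbb{R}^{n_{\text{out}}}.$$ *)

(* Defs.v *)
From HB Require Import structures.
From mathcomp Require Import all_boot all_order all_algebra.
From mathcomp Require Import boolp classical_sets reals.
Set Implicit Arguments. Unset Strict Implicit. Unset Printing Implicit Defensive.
Import Order.TTheory GRing.Theory Num.Theory.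
Local Open Scope ring_scope.
Local Open Scope classical_set_scope.

Section HardNet.
Variable R : realType.

Definition norm2 (n : nat) (v : 'cV[R]_n) : R :=
  Num.sqrt (\sum_(i < n) v i 0 ^+ 2).

Definition opnorm2 (p q : nat) (M : 'M[R]_(p, q)) : R :=
  sup [set norm2 (M *m v) | v in [set v : 'cV[R]_q | norm2 v <= 1]].

Definition mxle (p q : nat) (u v : 'M[R]_(p, q)) : Prop :=
  forall i j, u i j <= v i j.

(* Moore–Penrose pseudo-inverse for full-row-rank matrices: M^T (M M^T)^-1. *)
Definition pinv (p q : nat) (M : 'M[R]_(p, q)) : 'M[R]_(q, p) :=
  M^T *m invmx (M *m M^T).

Definition relu (p q : nat) (M : 'M[R]_(p, q)) : 'M[R]_(p, q) :=
  map_mx (fun t => Num.max t 0) M.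

Definition Atil (k ne m : nat) (A : 'M[R]_(k, ne + m)) (C : 'M[R]_(ne, ne + m))
  : 'M[R]_(k, m) :=
  rsubmx A - lsubmx A *m invmx (lsubmx C) *m rsubmx C.

Definition btil (k ne m : nat) (A : 'M[R]_(k, ne + m)) (b : 'cV[R]_k)
  (C : 'M[R]_(ne, ne + m)) (d : 'cV[R]_ne) : 'cV[R]_k :=
  b - lsubmx A *m invmx (lsubmx C) *m d.

(* HardNet-Aff projection P(f_theta)(x), given the data at the point x. *)
Definition hardnet_aff (k ne m : nat) (A : 'M[R]_(k, ne + m)) (b : 'cV[R]_k)
  (C : 'M[R]_(ne, ne + m)) (d : 'cV[R]_ne) (y : 'cV[R]_m) : 'cV[R]_(ne + m) :=
  let At := Atil A C in
  let ystar := y - pinv At *m relu (At *m y - btil A b C d) in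
  col_mx (invmx (lsubmx C) *m (d - rsubmx C *m ystar)) ystar.

End HardNet.

(* Main.v *)
Require Import Defs.
From HB Require Import structures.
From mathcomp Require Import all_boot all_order all_algebra.
From mathcomp Require Import boolp classical_sets reals.
From mathcomp Require Import ring lra.
Import Order.TTheory GRing.Theory Num.Theory.
Local Open Scope ring_scope.
Local Open Scope classical_set_scope.

Lemma sumsq_ge0 {R : realType} {n} (u : 'I_n -> R) : 0 <= \sum_i u i ^+ 2.
Proof. by apply: sumr_ge0 => i _; apply: sqr_ge0. Qed.

Lemma norm2_ge0 {R : realType} {n} (v : 'cV[R]_n) : 0 <= norm2 v.
Proof. exact: sqrtr_ge0. Qed.

Lemma norm2_sq {R : realType} {n} (v : 'cV[R]_n) : norm2 v ^+ 2 = \sum_i v i 0 ^+ 2.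
Proof. by rewrite /norm2 sqr_sqrtr // sumsq_ge0. Qed.

Lemma norm2_eq0 {R : realType} {n} (v : 'cV[R]_n) : norm2 v = 0 -> v = 0.
Proof.
move=> h; have : \sum_i v i 0 ^+ 2 == 0 by rewrite -norm2_sq h expr0n.
rewrite psumr_eq0; last by move=> i _; apply: sqr_ge0.
move/allP=> H; apply/matrixP=> i j; rewrite (ord1 j) mxE.
by have := H i (mem_index_enum _); rewrite sqrf_eq0 => /eqP.
Qed.

Lemma norm2N {R : realType} {n} (v : 'cV[R]_n) : norm2 (- v) = norm2 v.
Proof. by rewrite /norm2; congr Num.sqrt; apply: eq_bigr => i _; rewrite mxE sqrrN. Qed.

Lemma norm2Z {R : realType} {n} (c : R) (v : 'cV[R]_n) : norm2 (c *: v) = `|c| * norm2 v.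
Proof.
rewrite /norm2 (eq_bigr (fun i => c ^+ 2 * v i 0 ^+ 2)); last first.
  by move=> i _; rewrite mxE exprMn.
by rewrite -mulr_sumr sqrtrM ?sqr_ge0 // sqrtr_sqr.
Qed.

Lemma norm2_le {R : realType} {n} (v w : 'cV[R]_n) :
  (forall i, v i 0 ^+ 2 <= w i 0 ^+ 2) -> norm2 v <= norm2 w.
Proof. by move=> h; apply: ler_wsqrtr; apply: ler_sum => i _; apply: h. Qed.

Lemma sumsq_eq0 {R : realType} {n} (u : 'I_n -> R) :
  \sum_i u i ^+ 2 = 0 -> forall i, u i = 0.
Proof.
move=> h i; move/eqP: h; rewrite psumr_eq0; last by move=> j _; apply: sqr_ge0.
by move/allP/(_ i (mem_index_enum _)); rewrite sqrf_eq0 => /eqP.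
Qed.

Lemma CS {R : realType} {n} (u v : 'I_n -> R) :
  \sum_i u i * v i <= Num.sqrt (\sum_i u i ^+ 2) * Num.sqrt (\sum_i v i ^+ 2).
Proof.
set a := Num.sqrt _; set b := Num.sqrt _.
have ha : a ^+ 2 = \sum_i u i ^+ 2 by rewrite sqr_sqrtr // sumsq_ge0.
have hb : b ^+ 2 = \sum_i v i ^+ 2 by rewrite sqr_sqrtr // sumsq_ge0.
have a0 : 0 <= a by apply: sqrtr_ge0.
have b0 : 0 <= b by apply: sqrtr_ge0.
have key : 0 <= \sum_i (b * u i - a * v i) ^+ 2 by apply: sumsq_ge0.
rewrite (eq_bigr (fun i => b^+2 * u i ^+2 - (2*a*b) * (u i * v i) + a^+2 * v i ^+2)) in key;
  last by move=> i _; ring.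
rewrite big_split sumrB -!mulr_sumr -ha -hb in key.
have [ab0|abp] := eqVneq (a * b) 0.
  rewrite ab0; move/eqP: ab0; rewrite mulf_eq0 => /orP [] /eqP h0.
    have hu : \sum_i u i ^+ 2 = 0 by rewrite -ha h0 expr0n.
    have {}hu := sumsq_eq0 _ hu.
    rewrite big1 // => i _; rewrite hu; ring.
  have hv : \sum_i v i ^+ 2 = 0 by rewrite -hb h0 expr0n.
  have {}hv := sumsq_eq0 _ hv.
  rewrite big1 // => i _; rewrite hv; ring.
have abgt : 0 < a * b by rewrite lt_def abp mulr_ge0.
set S := \sum_i u i * v i in key *.
have key2 : 0 <= b ^+ 2 * a ^+ 2 - 2 * a * b * S + a ^+ 2 * b ^+ 2 by [].
nra.
Qed.

Lemma norm2D {R : realType} {n} (u v : 'cV[R]_n) : norm2 (u + v) <= norm2 u + norm2 v.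
Proof.
have hcs := CS (fun i => u i 0) (fun i => v i 0).
rewrite -/(norm2 u) -/(norm2 v) in hcs.
have e : \sum_i (u + v) i 0 ^+ 2 =
   \sum_i u i 0 ^+ 2 + 2 * \sum_i (u i 0 * v i 0) + \sum_i v i 0 ^+ 2.
  rewrite mulr_sumr -!big_split; apply: eq_bigr => i _; rewrite mxE /=; move: (u i 0) (v i 0) => x y; ring.
rewrite {1}/norm2 e -!norm2_sq.
have h : norm2 u ^+ 2 + 2 * (\sum_i u i 0 * v i 0) + norm2 v ^+ 2 <= (norm2 u + norm2 v) ^+ 2.
  have := norm2_ge0 u; have := norm2_ge0 v; move=> ? ?; nra.
by apply: le_trans (ler_wsqrtr h) _; rewrite sqrtr_sqr ger0_norm // addr_ge0 ?norm2_ge0.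
Qed.

Lemma norm2_col {R : realType} {n1 n2} (u : 'cV[R]_n1) (v : 'cV[R]_n2) :
  norm2 (col_mx u v) ^+ 2 = norm2 u ^+ 2 + norm2 v ^+ 2.
Proof.
rewrite !norm2_sq big_split_ord /=.
by congr (_ + _); apply: eq_bigr => i _; rewrite ?col_mxEu ?col_mxEd.
Qed.

Lemma norm20 {R : realType} {n} : norm2 (0 : 'cV[R]_n) = 0.
Proof. by rewrite /norm2 big1 ?sqrtr0 // => i _; rewrite mxE expr0n. Qed.

Lemma entry_le1 {R : realType} {n} (v : 'cV[R]_n) j : norm2 v <= 1 -> `|v j 0| <= 1.
Proof.
move=> h.
have h1 : v j 0 ^+ 2 <= 1.
  apply: (@le_trans _ _ (norm2 v ^+ 2)); last first.
    have := norm2_ge0 v; move=> ?; nra.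
  rewrite norm2_sq (bigD1 j) //= lerDl; apply: sumr_ge0 => i _; apply: sqr_ge0.
set x := v j 0 in h1 *.
rewrite ler_norml; apply/andP; split; nra.
Qed.

Lemma opnorm_has_sup {R : realType} {p q} (M : 'M[R]_(p, q)) :
  has_sup [set norm2 (M *m v) | v in [set v : 'cV[R]_q | norm2 v <= 1]].
Proof.
split.
  exists (norm2 (M *m 0)); exists 0 => //=; rewrite norm20 ler01 //.
exists (Num.sqrt (\sum_i (\sum_j `|M i j|) ^+ 2)) => y [v /= hv <-].
apply: ler_wsqrtr; apply: ler_sum => i _.
have hb : `|(M *m v) i 0| <= \sum_j `|M i j|.
  rewrite mxE; apply: le_trans (ler_norm_sum _ _ _) _; apply: ler_sum => j _.
  rewrite normrM; have := entry_le1 v j hv; have := normr_ge0 (M i j);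
  have := normr_ge0 (v j 0); move=> ? ? ?; nra.
move: hb; set x := (M *m v) i 0; set K := \sum_j _ => hb.
move: hb; rewrite ler_norml => /andP [h1 h2]; nra.
Qed.

Lemma opnorm_ge0 {R : realType} {p q} (M : 'M[R]_(p, q)) : 0 <= opnorm2 M.
Proof.
apply: le_trans (norm2_ge0 (M *m 0)) _; apply: sup_upper_bound; first exact: opnorm_has_sup.
by exists 0 => //=; rewrite norm20 ler01.
Qed.

Lemma opnorm_le {R : realType} {p q} (M : 'M[R]_(p, q)) v :
  norm2 (M *m v) <= opnorm2 M * norm2 v.
Proof.
have [h0|hn] := eqVneq (norm2 v) 0.
  by rewrite h0 mulr0 (norm2_eq0 _ h0) mulmx0 norm20.
set s := norm2 v in hn *.
have sp : 0 < s by rewrite lt_def hn norm2_ge0.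
have hw : norm2 (s^-1 *: v) <= 1.
  by rewrite norm2Z ger0_norm ?invr_ge0 ?(ltW sp) // -/s mulVf.
have hE : norm2 (M *m (s^-1 *: v)) <= opnorm2 M.
  by apply: sup_upper_bound; [exact: opnorm_has_sup | exists (s^-1 *: v)].
rewrite -scalemxAr norm2Z ger0_norm ?invr_ge0 ?(ltW sp) // in hE.
have -> : norm2 (M *m v) = (s^-1 * norm2 (M *m v)) * s by rewrite mulrC mulrA mulfV // mul1r.
by apply: ler_wpM2r; [exact: ltW|].
Qed.

Lemma aux (V : zmodType) (a p z : V) : a - (a + p - z) = z - p.
Proof. by rewrite opprB addrA [a + z]addrC addrKA. Qed.

Lemma aux2 (V : zmodType) (a p z : V) : a - (p - z) = a - p + z.
Proof. by rewrite opprB addrA addrAC. Qed.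

Lemma norm2B {R : realType} {n} (u v : 'cV[R]_n) : norm2 (u - v) = norm2 (v - u).
Proof. by rewrite -norm2N opprB. Qed.

Theorem mainTheorem2 (R : realType) (n_in n_ineq n_eq m : nat)
  (X : set 'cV[R]_n_in)
  (A : 'cV[R]_n_in -> 'M[R]_(n_ineq, n_eq + m)) (b : 'cV[R]_n_in -> 'cV[R]_n_ineq)
  (C : 'cV[R]_n_in -> 'M[R]_(n_eq, n_eq + m)) (d : 'cV[R]_n_in -> 'cV[R]_n_eq)
  (feas : forall x, X x -> exists y : 'cV[R]_(n_eq + m),
      mxle (A x *m y) (b x) /\ C x *m y = d x)
  (C1inv : forall x, X x -> lsubmx (C x) \in unitmx)
  (Afull : forall x, X x -> row_free (Atil (A x) (C x)))
  (f : 'cV[R]_n_in -> 'cV[R]_(n_eq + m))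
  (fA : forall x, X x -> mxle (A x *m f x) (b x))
  (fC : forall x, X x -> C x *m f x = d x)
  (f_theta : 'cV[R]_n_in -> 'cV[R]_m) (x : 'cV[R]_n_in) (hx : X x) :
  norm2 (f x - hardnet_aff (A x) (b x) (C x) (d x) (f_theta x))
  <= (1 + opnorm2 (pinv (Atil (A x) (C x))) * opnorm2 (Atil (A x) (C x)))
     * Num.sqrt (1 + opnorm2 (invmx (lsubmx (C x)) *m rsubmx (C x)) ^+ 2)
     * norm2 (dsubmx (f x) - f_theta x).
Proof.
have hC1 := C1inv x hx.
have hfA := fA x hx.
set C1 := lsubmx (C x); set C2 := rsubmx (C x).
set f1 := usubmx (f x); set f2 := dsubmx (f x).
set At := Atil (A x) (C x); set bt := btil (A x) (b x) (C x) (d x).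
set y := f_theta x.
have e1 : d x = C1 *m f1 + C2 *m f2.
  by rewrite -(fC x hx) -{1}[f x]vsubmxK -{1}[C x]hsubmxK mul_row_col.
have eAf : A x *m f x = lsubmx (A x) *m f1 + rsubmx (A x) *m f2.
  by rewrite -{1}[f x]vsubmxK -{1}[A x]hsubmxK mul_row_col.
have e2 : At *m (y - f2) = (At *m y - bt) + (b x - A x *m f x).
  have e2' : bt - At *m f2 = b x - A x *m f x.
    rewrite /bt /At /btil /Atil -/C1 -/C2 e1 eAf mulmxDr mulmxBl -!mulmxA (mulKmx hC1).
    move: (b x) (lsubmx (A x) *m f1) (lsubmx (A x) *m _) (rsubmx (A x) *m f2) => p q r s.
    by rewrite opprB !opprD !addrA addrNK.
  by rewrite -e2' mulmxBr addrA addrNK.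
set r := relu (At *m y - bt).
set ys := y - pinv At *m r.
have ehn : hardnet_aff (A x) (b x) (C x) (d x) y = col_mx (invmx C1 *m (d x - C2 *m ys)) ys by [].
have etop : f1 - invmx C1 *m (d x - C2 *m ys) = (invmx C1 *m C2) *m (ys - f2).
  rewrite e1 mulmxBr mulmxDr (mulKmx hC1) !mulmxA mulmxBr.
  by rewrite aux /ys !mulmxBr.
have hr : norm2 r <= norm2 (At *m (y - f2)).
  apply: norm2_le => i; rewrite e2 [in X in _ <= X]mxE /r mxE.
  have hg : 0 <= (b x - A x *m f x) i 0.
    have -> : (b x - A x *m f x) i 0 = b x i 0 - (A x *m f x) i 0 by rewrite !mxE.
    by rewrite subr_ge0; apply: hfA.
  move: hg; set t := (At *m y - bt) i 0; set g := (b x - A x *m f x) i 0 => hg.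
  rewrite /Num.max /Order.max; case: ifP => ht.
    by rewrite expr0n /=; apply: sqr_ge0.
  move/negbT: ht; rewrite -leNgt => ht; nra.
set w := f2 - ys.
set M := invmx C1 *m C2.
set P := pinv At.
have ew : w = (f2 - y) + P *m r.
  by rewrite /w /ys; apply: aux2.
have hw : norm2 w <= (1 + opnorm2 P * opnorm2 At) * norm2 (f2 - y).
  rewrite ew; apply: le_trans (norm2D _ _) _.
  have h1 := opnorm_le P r.
  have h2 := opnorm_le At (y - f2).
  rewrite (norm2B y f2) in h2.
  have p0 := opnorm_ge0 P; have a0 := opnorm_ge0 At.
  have n0 := norm2_ge0 (f2 - y); have r0 := norm2_ge0 r.
  have h4 : opnorm2 P * norm2 r <= opnorm2 P * (opnorm2 At * norm2 (f2 - y)).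
    by apply: ler_wpM2l => //; exact: le_trans hr h2.
  move: h1 h2 hr h4 p0 a0 n0 r0; set nPr := norm2 (P *m r); set nA := norm2 (At *m (y - f2)).
  set nr := norm2 r; set nf := norm2 (f2 - y); set oP := opnorm2 P; set oA := opnorm2 At.
  move=> *; lra.
have htop : norm2 (M *m (ys - f2)) <= opnorm2 M * norm2 w.
  by rewrite -opprB -/w mulmxN norm2N; apply: opnorm_le.
rewrite ehn -[f x]vsubmxK -/f1 -/f2 opp_col_mx add_col_mx etop -/w.
have hc : norm2 (col_mx (M *m (ys - f2)) w) =
          Num.sqrt (norm2 (M *m (ys - f2)) ^+ 2 + norm2 w ^+ 2).
  rewrite -norm2_col sqrtr_sqr; apply/esym; apply: ger0_norm; apply: norm2_ge0.
rewrite hc.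
have m0 := opnorm_ge0 M.
have w0 := norm2_ge0 w.
have t0 := norm2_ge0 (M *m (ys - f2)).
have hs : Num.sqrt (norm2 (M *m (ys - f2)) ^+ 2 + norm2 w ^+ 2)
          <= Num.sqrt (1 + opnorm2 M ^+ 2) * norm2 w.
  have -> : Num.sqrt (1 + opnorm2 M ^+ 2) * norm2 w = Num.sqrt ((1 + opnorm2 M ^+ 2) * norm2 w ^+ 2).
    rewrite sqrtrM; last by apply: addr_ge0; [exact: ler01 | exact: sqr_ge0].
    by rewrite sqrtr_sqr; congr (_ * _); apply/esym; apply: ger0_norm.
  apply: ler_wsqrtr.
  move: htop t0; set a := norm2 (M *m _); set o := opnorm2 M; set ww := norm2 w.
  move=> ht ta; nra.
apply: le_trans hs _.
have s0 := sqrtr_ge0 (1 + opnorm2 M ^+ 2).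
rewrite [(1 + _ * _) * _]mulrC -mulrA.
by apply: ler_wpM2l.
Qed.
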